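(* Let $G=(V,E)$ be a simple cubic bipartite graph that has no potential 4-cycles, and let $F_1$ and $F_2$ be 2-factors of $G$ such that for every cycle $C$ of $(V,F_1)$ there exists a cycle $D$ of $(V,F_2)$ with $|V(D)|\ge 10$ and $|V(C)\cap V(D)|\ge 4$. Then $(V,F_1)$ or $(V,F_2)$ has at most $|V|/8$ connected components.
   Context: A 2-factor of a graph $G=(V,E)$ is a set $F\subseteq E$ such that every node of $V$ is incident to exactly two edges of $F$; the components of $(V,F)$ are simple cycles, and for such a cycle $C$, $V(C)$ denotes its node set and its size is $|V(C)|$. A set $S$ of 4 nodes is a potential 4-cycle if some 2-factor $F$ of $G$ has a cycle in $(V,F)$ with node set exactly $S$. A graph is cubic if every node has degree exactly 3. *)

(* Defs.v *)
From mathcomp Require Import all_boot.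
Set Implicit Arguments. Unset Strict Implicit. Unset Printing Implicit Defensive.

Definition simple_graph (T : finType) (e : rel T) : Prop :=
  irreflexive e /\ symmetric e.

Definition edges (T : finType) (e : rel T) : {set {set T}} :=
  [set A : {set T} | [exists x, exists y, e x y && (A == [set x; y])]].

Definition fdeg (T : finType) (F : {set {set T}}) (x : T) : nat :=
  #|[set A in F | x \in A]|.

Definition cubic (T : finType) (e : rel T) : Prop :=
  forall x : T, #|[set y | e x y]| = 3.

Definition bipartite (T : finType) (e : rel T) : Prop :=
  exists c : T -> bool, forall x y, e x y -> c x != c y.

Definition two_factor (T : finType) (e : rel T) (F : {set {set T}}) : Prop :=
  F \subset edges e /\ forall x : T, fdeg F x = 2.

Definition fadj (T : finType) (F : {set {set T}}) : rel T :=
  fun x y => [set x; y] \in F.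

(* Node set of the connected component of (V, F) containing x; for a
   2-factor these are exactly the node sets V(C) of the cycles C. *)
Definition cycle_nodes (T : finType) (F : {set {set T}}) (x : T) : {set T} :=
  [set y | connect (fadj F) x y].

Definition ncomp (T : finType) (F : {set {set T}}) : nat :=
  #|[set cycle_nodes F x | x : T]|.

Definition potential_4cycle (T : finType) (e : rel T) (S : {set T}) : Prop :=
  #|S| = 4 /\ exists F, two_factor e F /\ exists x, cycle_nodes F x = S.

(* Main.v *)
Require Import Defs.
From mathcomp Require Import all_boot.
From mathcomp Require Import zify.

Set Implicit Arguments. Unset Strict Implicit. Unset Printing Implicit Defensive.

Lemma sum_in_card (U : finType) (A B : {set U}) : \sum_(b in B) (b \in A) = #|A :&: B|.
Proof.
rewrite -sum1_card big_mkcond [RHS]big_mkcond /=.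
by apply: eq_bigr => i _; rewrite inE; case: (i \in A); case: (i \in B).
Qed.

Section Nbr.
Variables (T : finType) (e : rel T) (F : {set {set T}}).
Hypotheses (irr : irreflexive e) (symE : symmetric e) (Fsub : F \subset edges e) (Fdeg : forall x, fdeg F x = 2).

Definition nbr (w : T) : {set T} := [set y | fadj F w y].

Lemma fadj_sym : symmetric (fadj F).
Proof. by move=> x y; rewrite /fadj setUC. Qed.

Lemma set2_eqE (a b w y : T) : a != b -> [set w; y] = [set a; b] ->
  (w == a) && (y == b) || (w == b) && (y == a).
Proof.
move=> nab E.
have wi : w \in [set a; b] by rewrite -E !inE eqxx.
have yi : y \in [set a; b] by rewrite -E !inE eqxx orbT.
have ai : a \in [set w; y] by rewrite E !inE eqxx.
have bi : b \in [set w; y] by rewrite E !inE eqxx orbT.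
move: wi yi ai bi; rewrite !inE.
case/orP=> /eqP -> ; case/orP=> /eqP ->.
all: rewrite (eq_sym b a); case: (a =P b) nab => //= _ _; rewrite !eqxx //=.
Qed.

Lemma fadj_e w y : fadj F w y -> e w y.
Proof.
move=> H; have := subsetP Fsub _ H; rewrite inE => /existsP[a /existsP[b /andP[eab /eqP E]]].
have nab : a != b by apply/eqP => ab; move: eab; rewrite ab (irr b).
case/orP: (set2_eqE nab E) => /andP[/eqP -> /eqP ->] //.
by rewrite symE.
Qed.

Lemma nbr_irr w : w \notin nbr w.
Proof. by rewrite in_set; apply/negP => /fadj_e; rewrite (irr w). Qed.

Lemma inF_edge A : A \in F -> exists a b, [/\ e a b, a != b & A = [set a; b]].
Proof.
move=> AF; have := subsetP Fsub _ AF; rewrite in_set => /existsP[a /existsP[b /andP[eab /eqP E]]].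
exists a, b; split=> //; apply/eqP => ab; move: eab; rewrite ab (irr b) //.
Qed.

Lemma set2_inj w : injective (fun y : T => [set w; y]).
Proof.
move=> y y' E.
have : y \in [set w; y'] by rewrite -E !inE eqxx orbT.
rewrite !inE => /orP[/eqP yw|/eqP //]; subst y.
have : y' \in [set w; w] by rewrite E !inE eqxx orbT.
by rewrite !inE orbb => /eqP.
Qed.

Lemma nbrP w y : (y \in nbr w) = ([set w; y] \in F).
Proof. by rewrite in_set. Qed.

Lemma nbr_key1 w A : A \in F -> w \in A -> exists2 y, y \in nbr w & A = [set w; y].
Proof.
move=> AF wA; have [a [b [eab nab E]]] := inF_edge AF.
move: wA; rewrite E !inE => /orP[] /eqP wE; subst w.
  exists b => //. rewrite nbrP. rewrite -E. exact AF.
exists a. rewrite nbrP. rewrite setUC -E. exact AF. by rewrite setUC.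
Qed.

Lemma nbr_key w : [set A in F | w \in A] = [set [set w; y] | y in nbr w].
Proof.
apply/setP => A; rewrite in_set; apply/andP/imsetP.
  by case=> AF wA; apply: nbr_key1.
case=> y yn ->; split; first by rewrite -nbrP.
by rewrite !inE eqxx.
Qed.

Lemma card_nbr w : #|nbr w| = 2.
Proof.
by rewrite -(Fdeg w) /fdeg nbr_key card_imset //; apply: set2_inj.
Qed.
Definition comps := [set cycle_nodes F x | x : T].

Lemma csym : connect_sym (fadj F).
Proof. exact: sym_connect_sym fadj_sym. Qed.

Lemma cn_eq x y : y \in cycle_nodes F x -> cycle_nodes F y = cycle_nodes F x.
Proof.
rewrite in_set => H; apply/setP => z; rewrite !in_set.
by rewrite (same_connect csym H).
Qed.

Lemma cn_self x : x \in cycle_nodes F x.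
Proof. by rewrite in_set connect0. Qed.

Lemma nbr_sub x w : w \in cycle_nodes F x -> nbr w \subset cycle_nodes F x.
Proof.
rewrite in_set => H; apply/subsetP => y; rewrite in_set => Hy.
rewrite in_set; apply: connect_trans H _; exact: connect1.
Qed.

Lemma blocks (v : T) : [set D : {set T} | v \in D] :&: comps = [set cycle_nodes F v].
Proof.
apply/setP => D; rewrite in_setI in_set1 [in X in X && _]in_set; apply/andP/eqP.
  case=> vD; rewrite /comps => /imsetP[x _ Dx]; subst D; by rewrite (cn_eq vD).
move=> ->; split; first exact: cn_self.
by rewrite /comps; apply/imsetP; exists v.
Qed.

Lemma card_split (A : {set T}) : #|A| = \sum_(C in comps) #|C :&: A|.
Proof.
under eq_bigr => C _ do rewrite -sum_in_card.
rewrite exchange_big /= -sum1_card; apply: eq_bigr => v _.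
under eq_bigr => C _ do rewrite -[v \in C](in_set (fun D : {set T} => v \in D)).
by rewrite sum_in_card blocks cards1.
Qed.

Lemma nbr_e w y : y \in nbr w -> e w y.
Proof. rewrite nbrP => H; exact: fadj_e. Qed.

Lemma nbr_symm w y : (y \in nbr w) = (w \in nbr y).
Proof. by rewrite !nbrP setUC. Qed.

Lemma comp_ge3 x : 3 <= #|cycle_nodes F x|.
Proof.
have S : x |: nbr x \subset cycle_nodes F x.
  apply/subsetP => y; rewrite in_setU1 => /orP[/eqP->|H]; first exact: cn_self.
  exact: (subsetP (nbr_sub (cn_self x))).
by have := subset_leq_card S; rewrite cardsU1 nbr_irr card_nbr.
Qed.

Lemma comp_even (c : T -> bool) (hc : forall x y, e x y -> c x != c y) x :
  exists k, #|cycle_nodes F x| = 2 * k.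
Proof.
set D := cycle_nodes F x.
set W := D :&: [set v | c v]; set B := D :\: [set v | c v].
have nW : forall w, w \in W -> nbr w \subset B.
  move=> w; rewrite in_setI in_set => /andP[wD cw]; apply/subsetP => y yn.
  rewrite in_setD in_set (subsetP (nbr_sub wD) _ yn) andbT.
  by have := hc _ _ (nbr_e yn); rewrite cw; case: (c y).
have nB : forall b, b \in B -> nbr b \subset W.
  move=> w; rewrite in_setD in_set => /andP[cw wD]; apply/subsetP => y yn.
  rewrite in_setI in_set (subsetP (nbr_sub wD) _ yn) /=.
  by have := hc _ _ (nbr_e yn); move: cw; case: (c w); case: (c y).
have sW : \sum_(w in W) #|nbr w| = \sum_(w in W) \sum_(b in B) nat_of_bool (b \in nbr w).
  by apply: eq_bigr => w wW; rewrite sum_in_card; move/setIidPl: (nW w wW) => ->.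
have sB : \sum_(b in B) #|nbr b| = \sum_(b in B) \sum_(w in W) nat_of_bool (w \in nbr b).
  by apply: eq_bigr => w wW; rewrite sum_in_card; move/setIidPl: (nB w wW) => ->.
have E : \sum_(w in W) #|nbr w| = \sum_(b in B) #|nbr b|.
  rewrite sW sB exchange_big /=; apply: eq_bigr => b _; apply: eq_bigr => w _.
  by rewrite nbr_symm.
move: E; rewrite (eq_bigr (fun _ => 2)); last by move=> w _; rewrite card_nbr.
rewrite [in X in _ = X -> _](eq_bigr (fun _ => 2)); last by move=> w _; rewrite card_nbr.
rewrite !sum_nat_const => E.
have : #|W| + #|B| = #|D| by rewrite cardsID.
move=> <-; exists #|W|; lia.
Qed.

End Nbr.

Theorem lemma2 (T : finType) (e : rel T) (F1 F2 : {set {set T}}) :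
  simple_graph e -> cubic e -> bipartite e ->
  (forall S : {set T}, ~ potential_4cycle e S) ->
  two_factor e F1 -> two_factor e F2 ->
  (forall x : T, exists y : T,
      10 <= #|cycle_nodes F2 y| /\ 4 <= #|cycle_nodes F1 x :&: cycle_nodes F2 y|) ->
  8 * ncomp F1 <= #|T| \/ 8 * ncomp F2 <= #|T|.
Proof.
move=> [irr symE] cub [c hc] no4 [F1sub F1deg] [F2sub F2deg] H.
rewrite /ncomp -/(comps F1) -/(comps F2).
set P1 := comps F1; set P2 := comps F2.
pose f := fun C : {set T} => odflt set0 [pick D in P2 | (10 <= #|D|) && (4 <= #|C :&: D|)].
have fP : forall C, C \in P1 -> [/\ f C \in P2, 10 <= #|f C| & 4 <= #|C :&: f C|].
  move=> C CP; have /imsetP[x _ CE] : C \in [set cycle_nodes F1 x | x : T] := CP.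
  rewrite CE /f.
  case: pickP => [D /andP[DP /andP[h1 h2]] | none] /=; first by split.
  have [y [h1 h2]] := H x.
  have := none (cycle_nodes F2 y); rewrite h1 h2 andbT /= => /negbT/negP NP.
  exfalso; apply: NP; rewrite /P2 /comps andbT; apply/imsetP; by exists y.
have sizeD : forall D, D \in P2 -> 6 <= #|D|.
  move=> D DP; have /imsetP[x _ ->] : D \in [set cycle_nodes F2 x | x : T] := DP.
  have g3 := comp_ge3 irr symE F2sub F2deg x.
  have [k hk] := comp_even irr symE F2sub F2deg hc x.
  have n4 : #|cycle_nodes F2 x| != 4.
    apply/eqP => h4; apply: (no4 (cycle_nodes F2 x)); split=> //.
    by exists F2; split; [split | exists x].
  lia.
have k1 : #|P1| = \sum_(D in P2) \sum_(C in P1 | f C == D) 1.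
  rewrite -sum1_card (partition_big f (fun D => D \in P2)) //.
  by move=> C CP; case: (fP C CP).
have hb : forall D, D \in P2 -> 4 * (\sum_(C in P1 | f C == D) 1) <= #|D|.
  move=> D DP; rewrite (card_split F1 D) [X in _ <= X](bigID (fun C => f C == D)) /=.
  apply: (leq_trans _ (leq_addr _ _)); rewrite big_distrr /=.
  apply: leq_sum => C /andP[CP /eqP fC]; rewrite muln1.
  by case: (fP C CP); rewrite fC.
have hD : forall D, D \in P2 -> 2 * (\sum_(C in P1 | f C == D) 1) + 6 <= #|D|.
  move=> D DP; have := hb D DP; have := sizeD D DP.
  case: (pickP (fun C => (C \in P1) && (f C == D))) => [C /andP[CP /eqP fC] | none].
    by case: (fP C CP); rewrite fC => _ h10 _; lia.
  rewrite big_pred0 //; lia.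
have total : 2 * #|P1| + 6 * #|P2| <= #|T|.
  rewrite -cardsT (card_split F2 [set: T]) -/P2.
  under [X in _ <= X]eq_bigr => D _ do rewrite setIT.
  rewrite k1 big_distrr mulnC -sum_nat_const -big_split /=.
  by apply: leq_sum => D DP; apply: hD.
lia.
Qed.
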